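(* For the SG-SAV iteration with $r_0=\sqrt{f(x_0)+c}$, assume (A.3) and (A.4). Then for every $T\ge1$: (i) $r_t>0$ for all $t$, $r_{t+1}\le r_t$, and $r_t-r_{t+1}=\frac{\eta\,r_{t+1}}{2\tilde F_t^2}\|G_t\|^2$; (ii) $\mathbb{E}\big[\sum_{t=0}^{T-1}r_{t+1}\|G_t\|^2\big]\le\frac{2\sqrt{f(x_0)+c}\,B}{\eta}$; (iii) $\mathbb{E}\big[\sum_{t=0}^{T-1}\rho_t^2\|G_t\|^2\big]\le\frac{2(f(x_0)+c)B}{a\eta}$, where $\rho_t:=r_{t+1}/\tilde F_t$; (iv) $\mathbb{E}\big[\sum_{t=0}^{T-1}r_{t+1}|\langle\nabla f(x_t)-G_t,G_t\rangle|\big]\le\sqrt T\,\sigma_0\sqrt{\frac{2(f(x_0)+c)B}{\eta}}$.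
   Context: Let $f:\mathbb{R}^d\to\mathbb{R}$ be continuously differentiable and let $c\ge0$ be a constant with $f^*:=\inf_{x}f(x)>-c$. Let $\xi_0,\xi_1,\dots$ be random variables. For each $x$ and sample $\xi$, let $f(x;\xi)$ be a stochastic function value and $G(x;\xi)\in\mathbb{R}^d$ a stochastic gradient. Write $G_t:=G(x_t;\xi_t)$ and $\tilde F_t:=\sqrt{f(x_t;\xi_t)+c}$. Given $x_0$, $r_0$ and $\eta>0$, the SG-SAV iteration defines $(x_{t+1},r_{t+1})$ as the solution of $$x_{t+1}=x_t-\eta\,\frac{r_{t+1}}{\tilde F_t}\,G_t,\qquad r_{t+1}=r_t+\frac{1}{2\tilde F_t}\langle G_t,\,x_{t+1}-x_t\rangle .$$ (A.3): $\mathbb{E}_{\xi_t}\|G_t-\nabla f(x_t)\|^2\le\sigma_0^2$ for all $t$ (conditional expectation over $\xi_t$ given $\xi_0,\dots,\xi_{t-1}$). (A.4): there are $0<a\le B$ with $a\le f(x)+c\le B$ and $a\le f(x;\xi)+c\le B$ for all $x,\xi$. *)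

(* Defs.v *)
From HB Require Import structures.
From mathcomp Require Import all_boot all_order all_algebra.
From mathcomp Require Import all_classical all_reals all_analysis.
Set Implicit Arguments. Unset Strict Implicit. Unset Printing Implicit Defensive.
Import Order.TTheory GRing.Theory Num.Theory.
Import numFieldNormedType.Exports.
Local Open Scope classical_set_scope.
Local Open Scope ring_scope.

Definition vdot {R : realType} {d : nat} (u v : 'rV[R]_d) : R :=
  \sum_(i < d) u 0 i * v 0 i.
Definition sqnorm {R : realType} {d : nat} (u : 'rV[R]_d) : R := vdot u u.

(* sigma-algebra generated by the random variables xi_0, ..., xi_{t-1}
   (the trivial sigma-algebra {set0, setT} when t = 0). *)
Definition past_sigma {dO dX} {Omega : measurableType dO} {Xi : measurableType dX}
  (xi : nat -> Omega -> Xi) (t : nat) : set (set Omega) :=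
  <<s \bigcup_(i in [set k : nat | (k < t)%N])
        preimage_set_system setT (xi i) (@measurable _ Xi) >>.

(* Main.v *)
Require Import Defs.
From HB Require Import structures.
From mathcomp Require Import all_boot all_order all_algebra.
From mathcomp Require Import all_classical all_reals all_analysis.
From mathcomp Require Import ring lra measurable_realfun.
Import Order.TTheory GRing.Theory Num.Theory.
Import numFieldNormedType.Exports.
Local Open Scope classical_set_scope.
Local Open Scope ring_scope.

Lemma vdotZr {R : realType} {d : nat} (u v : 'rV[R]_d) k :
  vdot u (k *: v) = k * vdot u v.
Proof.
rewrite /vdot mulr_sumr; apply: eq_bigr => i _; rewrite mxE; ring.
Qed.

Lemma sqnorm_ge0 {R : realType} {d : nat} (u : 'rV[R]_d) : 0 <= sqnorm u.
Proof. by apply: sumr_ge0 => i _; rewrite -expr2 sqr_ge0. Qed.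

Lemma amgm_vdot {R : realType} {d : nat} (u v : 'rV[R]_d) (al : R) : 0 < al ->
  `|vdot u v| <= al * sqnorm u + (4 * al)^-1 * sqnorm v.
Proof.
move=> al0; rewrite /sqnorm /vdot mulr_sumr mulr_sumr -big_split /=.
apply: le_trans (ler_norm_sum _ _ _) _; apply: ler_sum => i _.
have h : forall p q : R, `|p * q| <= al * (p * p) + (4 * al)^-1 * (q * q).
  move=> p q; rewrite normrM.
  have hp : `|p| * `|p| = p * p by rewrite -normrM ger0_norm // -expr2 sqr_ge0.
  have hq : `|q| * `|q| = q * q by rewrite -normrM ger0_norm // -expr2 sqr_ge0.
  rewrite -hp -hq.
  have ia : 0 < (4 * al)^-1 by rewrite invr_gt0 mulr_gt0.
  have e : (4 * al)^-1 * (4 * al) = 1 by rewrite mulVf // gt_eqF // mulr_gt0.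
  set P := `|p|; set Q := `|q|; set ia' := (4 * al)^-1 in ia e *.
  have H := mulr_ge0 (ltW ia) (sqr_ge0 (2 * al * P - Q)).
  have E : ia' * (2 * al * P - Q) ^+ 2 =
    (ia' * (4 * al)) * (al * (P * P)) - (ia' * (4 * al)) * (P * Q) + ia' * (Q * Q)
    by ring.
  rewrite E e in H; lra.
exact: h.
Qed.

Lemma pos_step {R : realType} (r r' k : R) : 0 < r -> 0 <= k -> r - r' = k * r' ->
  0 < r' /\ r' <= r.
Proof. move=> ? ? ?; split; nra. Qed.

Lemma minv d (Omega : measurableType d) (R : realType) (h : Omega -> R) (a : R) :
  0 < a -> measurable_fun setT h -> (forall w, a <= h w) ->
  measurable_fun setT (fun w => (h w)^-1).
Proof.
move=> a0 mh ha.
have -> : (fun w => (h w)^-1) = (fun y : R => (Num.max y a)^-1) \o h.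
  apply/funext => w /=; congr (_^-1).
  by rewrite max_l // ha.
apply: measurableT_comp => //; apply: continuous_measurable_fun => y.
have hs : (fun y : R => Num.max y a) y != 0.
  by rewrite /= gt_eqF // (lt_le_trans a0) // le_max lexx orbT.
have hc : {for y, continuous (fun y : R => Num.max y a)}.
  by apply: (@continuous_max R R id (cst a)); [exact: cvg_id | exact: cvg_cst].
exact: (continuousV (s := fun z : R => Num.max z a) (x := y) hs hc).
Qed.

Lemma mvdot d (Omega : measurableType d) (R : realType) n (g1 g2 : Omega -> 'rV[R]_n) :
  (forall i, measurable_fun setT (fun w => g1 w 0 i)) ->
  (forall i, measurable_fun setT (fun w => g2 w 0 i)) ->
  measurable_fun setT (fun w => vdot (g1 w) (g2 w)).
Proof.
move=> m1 m2; rewrite /vdot; apply: measurable_sum => i.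
exact: measurable_funM.
Qed.

Lemma mcompB d (Omega : measurableType d) (R : realType) n (g1 g2 : Omega -> 'rV[R]_n) :
  (forall i, measurable_fun setT (fun w => g1 w 0 i)) ->
  (forall i, measurable_fun setT (fun w => g2 w 0 i)) ->
  forall i, measurable_fun setT (fun w => (g1 w - g2 w) 0 i).
Proof.
move=> m1 m2 i.
have -> : (fun w => (g1 w - g2 w) 0 i) = (fun w => g1 w 0 i - g2 w 0 i).
  by apply/funext => w; rewrite !mxE.
exact: measurable_funB.
Qed.

Lemma past_setT dO dX (Omega : measurableType dO) (Xi : measurableType dX)
  (xi : nat -> Omega -> Xi) t : past_sigma xi t setT.
Proof.
have [_ hC _] := smallest_sigma_algebra setT
  (\bigcup_(i in [set k : nat | (k < t)%N])
        preimage_set_system setT (xi i) (@measurable _ Xi)).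
by rewrite -(setD0 setT); apply: hC; exact: sigma_algebra0.
Qed.

Lemma E_le_cst d (Omega : measurableType d) (R : realType) (P : probability Omega R)
  (X : Omega -> R) (M : R) : measurable_fun setT X -> (forall w, 0 <= X w) ->
  (forall w, X w <= M) -> ('E_P[X] <= M%:E)%E.
Proof.
move=> mX X0 XM; rewrite unlock.
apply: (@le_trans _ _ (\int[P]_w (cst M%:E) w)%E).
  apply: ge0_le_integral => //.
  - by move=> w _; rewrite lee_fin.
  - exact/measurable_EFinP.
  - by move=> w _; rewrite lee_fin.
by rewrite integral_cst //= probability_setT mule1.
Qed.

Lemma sqnormB {R : realType} {d : nat} (u v : 'rV[R]_d) : sqnorm (u - v) = sqnorm (v - u).
Proof.
rewrite -opprB /sqnorm /vdot; apply: eq_bigr => i _; rewrite !mxE; ring.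
Qed.
Theorem mainTheorem6
  (R : realType) (d : nat)
  (* objective f, its gradient, and the constant c *)
  (f : 'rV[R]_d -> R) (gradf : 'rV[R]_d -> 'rV[R]_d) (c : R)
  (Hf_diff : forall x, differentiable f x)
  (Hf_grad : forall x h, 'd f x h = vdot (gradf x) h)
  (Hgrad_cont : continuous gradf)
  (Hc : 0 <= c)
  (Hinf : exists m : R, - c < m /\ forall x, m <= f x)
  (* probability space and samples *)
  (dO dX : measure_display) (Omega : measurableType dO) (Xi : measurableType dX)
  (P : probability Omega R)
  (xi : nat -> Omega -> Xi) (Hxi_meas : forall t, measurable_fun setT (xi t))
  (* stochastic function values and stochastic gradients *)
  (fs : 'rV[R]_d -> Xi -> R) (G : 'rV[R]_d -> Xi -> 'rV[R]_d)
  (* SG-SAV iterates *)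
  (x0 : 'rV[R]_d) (eta : R) (Heta : 0 < eta)
  (x : nat -> Omega -> 'rV[R]_d) (r : nat -> Omega -> R)
  (Hx0 : forall w, x 0%N w = x0)
  (Hr0 : forall w, r 0%N w = Num.sqrt (f x0 + c))
  (Hx_step : forall t w,
     x t.+1 w = x t w - (eta * r t.+1 w / Num.sqrt (fs (x t w) (xi t w) + c))
                          *: G (x t w) (xi t w))
  (Hr_step : forall t w,
     r t.+1 w = r t w + (2 * Num.sqrt (fs (x t w) (xi t w) + c))^-1
                          * vdot (G (x t w) (xi t w)) (x t.+1 w - x t w))
  (* the quantities G_t, grad f(x_t), f(x_t; xi_t) are random variables *)
  (HG_meas : forall t (i : 'I_d),
     measurable_fun setT (fun w => G (x t w) (xi t w) 0 i))
  (Hgrad_meas : forall t (i : 'I_d),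
     measurable_fun setT (fun w => gradf (x t w) 0 i))
  (Hfs_meas : forall t, measurable_fun setT (fun w => fs (x t w) (xi t w)))
  (* (A.3): E_{xi_t} || G_t - grad f(x_t) ||^2 <= sigma0^2, i.e. the
     conditional expectation given xi_0..xi_{t-1} is a.s. bounded by sigma0^2 *)
  (sigma0 : R) (Hsigma0 : 0 <= sigma0)
  (HA3 : forall t (A : set Omega), past_sigma xi t A ->
     (\int[P]_(w in A) (sqnorm (G (x t w) (xi t w) - gradf (x t w)))%:E
        <= (sigma0 ^+ 2)%:E * P A)%E)
  (* (A.4) *)
  (a B : R) (Ha : 0 < a) (HaB : a <= B)
  (HA4f : forall y, a <= f y + c <= B)
  (HA4fs : forall y s, a <= fs y s + c <= B)
  (T : nat) (HT : (1 <= T)%N) :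
  let Ft := fun t w => Num.sqrt (fs (x t w) (xi t w) + c) in
  let Gt := fun t w => G (x t w) (xi t w) in
  (* (i) *)
  (forall t w, 0 < r t w /\ r t.+1 w <= r t w /\
     r t w - r t.+1 w = eta * r t.+1 w / (2 * Ft t w ^+ 2) * sqnorm (Gt t w)) /\
  (* (ii) *)
  ('E_P[fun w => (\sum_(t < T) r t.+1 w * sqnorm (Gt t w))%R]
     <= (2 * Num.sqrt (f x0 + c) * B / eta)%:E)%E /\
  (* (iii) with rho_t := r_{t+1} / Ft_t *)
  ('E_P[fun w => (\sum_(t < T) (r t.+1 w / Ft t w) ^+ 2 * sqnorm (Gt t w))%R]
     <= (2 * (f x0 + c) * B / (a * eta))%:E)%E /\
  (* (iv) *)
  ('E_P[fun w => (\sum_(t < T)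
          r t.+1 w * `| vdot (gradf (x t w) - Gt t w) (Gt t w) |)%R]
     <= (Num.sqrt T%:R * sigma0 * Num.sqrt (2 * (f x0 + c) * B / eta))%:E)%E.
Proof.
move=> Ft Gt.
pose K t w := fs (x t w) (xi t w) + c.
pose S t w := sqnorm (Gt t w).
pose k t w := eta / (2 * K t w) * S t w.
have Ka t w : a <= K t w by have /andP[] := HA4fs (x t w) (xi t w).
have KB t w : K t w <= B by have /andP[] := HA4fs (x t w) (xi t w).
have K0 t w : 0 < K t w := lt_le_trans Ha (Ka t w).
have FtK t w : Ft t w ^+ 2 = K t w.
  by rewrite /Ft /= sqr_sqrtr //; apply: ltW; exact: K0.
have Ft0 t w : 0 < Ft t w.
  by rewrite /Ft /= sqrtr_gt0; exact: K0.
have S0 t w : 0 <= S t w := sqnorm_ge0 _.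
have k0 t w : 0 <= k t w.
  rewrite /k; apply: mulr_ge0 => //; apply: divr_ge0; first exact: ltW.
  by rewrite mulr_ge0 // ltW.
have ident t w : r t w - r t.+1 w =
    eta * r t.+1 w / (2 * Ft t w ^+ 2) * sqnorm (Gt t w).
  have H := Hr_step t w.
  have hv : vdot (G (x t w) (xi t w)) (x t.+1 w - x t w) =
      - (eta * r t.+1 w / Ft t w * S t w).
    by rewrite (Hx_step t w) addrAC subrr add0r -scaleNr vdotZr mulNr.
  rewrite hv in H.
  change (r t.+1 w = r t w + (2 * Ft t w)^-1 * - (eta * r t.+1 w / Ft t w * S t w)) in H.
  have -> : r t w - r t.+1 w = (2 * Ft t w)^-1 * (eta * r t.+1 w / Ft t w * S t w)
    by lra.
  have := Ft0 t w; rewrite /S => hF; field.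
  by rewrite gt_eqF.
have identk t w : r t w - r t.+1 w = k t w * r t.+1 w.
  rewrite ident FtK /k /S; have := K0 t w => hK; field.
  by rewrite gt_eqF.
have r00 w : 0 < r 0%N w.
  rewrite Hr0 sqrtr_gt0 (lt_le_trans Ha) //.
  by have /andP[] := HA4f x0.
have rpos t w : 0 < r t w.
  elim: t w => [|t IH] w; first exact: r00.
  by case: (pos_step _ _ _ (IH w) (k0 t w) (identk t w)).
have mono t w : r t.+1 w <= r t w.
  by case: (pos_step _ _ _ (rpos t w) (k0 t w) (identk t w)).
have rle0 t w : r t w <= Num.sqrt (f x0 + c).
  rewrite -(Hr0 w); elim: t => // t IH; exact: le_trans (mono t w) IH.
split.
  by move=> t w; split; [exact: rpos | split; [exact: mono | exact: ident]].
have mS t : measurable_fun setT (S t).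
  exact: (@mvdot _ _ _ _ (fun w => G (x t w) (xi t w))
                (fun w => G (x t w) (xi t w)) (HG_meas t) (HG_meas t)).
have mK t : measurable_fun setT (K t).
  by apply: measurable_funD => //; exact: Hfs_meas.
have mk t : measurable_fun setT (k t).
  apply: measurable_funM; last exact: mS.
  apply: measurable_funM => //.
  apply: (@minv _ _ _ (fun w => 2 * K t w) (2 * a)).
  - by rewrite mulr_gt0.
  - by apply: measurable_funM => //.
  - by move=> w; rewrite ler_wpM2l // Ka.
have mr t : measurable_fun setT (r t).
  elim: t => [|t IH].
    have -> : r 0%N = cst (Num.sqrt (f x0 + c)) by apply/funext => w; rewrite Hr0.
    exact: measurable_cst.
  have -> : r t.+1 = (fun w => r t w * (1 + k t w)^-1).
    apply/funext => w; have e := identk t w; have hk := k0 t w.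
    have -> : r t w = (1 + k t w) * r t.+1 w by lra.
    field; by rewrite gt_eqF // ltr_wpDr.
  apply: measurable_funM => //.
  apply: (@minv _ _ _ (fun w => 1 + k t w) 1) => //.
  - by apply: measurable_funD => //.
  - by move=> w; rewrite lerDl.
set r0 := Num.sqrt (f x0 + c).
set Y := 2 * r0 * B / eta.
have B0 : 0 < B := lt_le_trans Ha HaB.
have Y0 : 0 < Y by rewrite /Y !mulr_gt0 ?invr_gt0 // /r0 sqrtr_gt0 (lt_le_trans Ha) //;
  have /andP[] := HA4f x0.
have sumb w n : \sum_(t < n) r t.+1 w * S t w <= 2 * B / eta * (r 0%N w - r n w).
  elim: n => [|n IH]; first by rewrite big_ord0 subrr mulr0.
  rewrite big_ord_recr /=.
  have e : r n.+1 w * S n w = 2 * K n w / eta * (r n w - r n.+1 w).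
    rewrite identk /k; have := K0 n w => hK; field.
    by rewrite !gt_eqF.
  have h2 : 2 * K n w / eta * (r n w - r n.+1 w) <= 2 * B / eta * (r n w - r n.+1 w).
    apply: ler_wpM2r; first by rewrite subr_ge0 mono.
    apply: ler_wpM2r; first by rewrite invr_ge0 ltW.
    by rewrite ler_wpM2l.
  rewrite e; lra.
have sumY w : \sum_(t < T) r t.+1 w * S t w <= Y.
  apply: le_trans (sumb w T) _.
  have hBe : 0 <= 2 * B / eta by rewrite divr_ge0 ?mulr_ge0 ?ltW.
  have := mulr_ge0 hBe (ltW (rpos T w)).
  rewrite (Hr0 w) /Y -/r0; lra.
have rS0 t w : 0 <= r t.+1 w * S t w by rewrite mulr_ge0 // ltW.
split.
  apply: E_le_cst.
  - apply: measurable_sum => t /=; apply: measurable_funM; [exact: mr | exact: mS].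
  - by move=> w; apply: sumr_ge0 => t _; exact: rS0.
  - exact: sumY.
have fc0 : 0 < f x0 + c by apply: (lt_le_trans Ha); have /andP[] := HA4f x0.
have r0sq : r0 * r0 = f x0 + c by rewrite -expr2 sqr_sqrtr // ltW.
have r0pos : 0 < r0 by rewrite sqrtr_gt0.
split.
  have e3 : (fun w => \sum_(t < T) (r t.+1 w / Ft t w) ^+ 2 * sqnorm (Gt t w)) =
     (fun w => \sum_(t < T) (r t.+1 w * (K t w)^-1) * (r t.+1 w * S t w)).
    apply/funext => w; apply: eq_bigr => t _.
    rewrite -FtK /S; have := Ft0 t w => hF; field; by rewrite gt_eqF.
  rewrite e3.
  apply: E_le_cst.
  - apply: measurable_sum => t /=; apply: measurable_funM; last first.
      by apply: measurable_funM; [exact: mr | exact: mS].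
    apply: measurable_funM; first exact: mr.
    exact: (@minv _ _ _ (K t) a Ha (mK t) (Ka t)).
  - move=> w; apply: sumr_ge0 => t _; apply: mulr_ge0 => //.
    by apply: mulr_ge0; [exact: ltW | rewrite invr_ge0 ltW // K0].
  - move=> w.
    apply: (@le_trans _ _ (\sum_(t < T) (r0 / a) * (r t.+1 w * S t w))).
      apply: ler_sum => t _; apply: ler_wpM2r => //.
      apply: ler_pM.
      - exact: ltW.
      - by rewrite invr_ge0 ltW // K0.
      - exact: rle0.
      - by rewrite lef_pV2 ?posrE ?K0.
    rewrite -mulr_sumr.
    apply: le_trans (ler_wpM2l _ (sumY w)) _.
      by rewrite divr_ge0 // ltW.
    have -> : r0 / a * Y = 2 * (r0 * r0) * B / (a * eta).
      rewrite /Y; field; by rewrite !gt_eqF.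
    by rewrite r0sq.
pose U t w := sqnorm (G (x t w) (xi t w) - gradf (x t w)).
have mU t : measurable_fun setT (U t).
  exact: (@mvdot _ _ _ _ (fun w => G (x t w) (xi t w) - gradf (x t w))
     (fun w => G (x t w) (xi t w) - gradf (x t w))
     (@mcompB _ _ _ _ _ _ (HG_meas t) (Hgrad_meas t))
     (@mcompB _ _ _ _ _ _ (HG_meas t) (Hgrad_meas t))).
have U0 t w : 0 <= U t w := sqnorm_ge0 _.
have EU t : (\int[P]_w (U t w)%:E <= (sigma0 ^+ 2)%:E)%E.
  by have := HA3 t setT (@past_setT _ _ _ _ xi t); rewrite /= probability_setT mule1.
have key al : 0 < al -> ('E_P[fun w => (\sum_(t < T)
          r t.+1 w * `| vdot (gradf (x t w) - Gt t w) (Gt t w) |)%R]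
      <= (r0 * al * (T%:R * sigma0 ^+ 2) + (4 * al)^-1 * Y)%:E)%E.
  move=> al0; rewrite unlock.
  have ia0 : 0 <= (4 * al)^-1 by rewrite invr_ge0 mulr_ge0 // ltW.
  apply: (@le_trans _ _ (\int[P]_w
      (r0 * al * \sum_(t < T) U t w + (4 * al)^-1 * Y)%:E)%E).
    apply: ge0_le_integral => //.
    - move=> w _; rewrite lee_fin; apply: sumr_ge0 => t _; apply: mulr_ge0 => //.
      exact: ltW.
    - apply/measurable_EFinP; apply: measurable_sum => t /=.
      apply: measurable_funM; first exact: mr.
      apply: measurableT_comp; first exact: normr_measurable.
      exact: (@mvdot _ _ _ _ (fun w => gradf (x t w) - G (x t w) (xi t w))
         (fun w => G (x t w) (xi t w))
         (@mcompB _ _ _ _ _ _ (Hgrad_meas t) (HG_meas t)) (HG_meas t)).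
    - apply/measurable_EFinP; apply: measurable_funD => //.
      apply: measurable_funM => //; apply: measurable_sum => t; exact: mU.
    - move=> w _; rewrite lee_fin.
      apply: (@le_trans _ _ (\sum_(t < T) (r0 * al * U t w +
                (4 * al)^-1 * (r t.+1 w * S t w)))).
        apply: ler_sum => t _.
        have h1 := @amgm_vdot _ _ (gradf (x t w) - Gt t w) (Gt t w) al al0.
        rewrite sqnormB in h1.
        have h2 := ler_wpM2l (ltW (rpos t.+1 w)) h1.
        have h3 := mulr_ge0 (ltW al0) (U0 t w).
        have h4 : 0 <= r0 - r t.+1 w by rewrite subr_ge0 rle0.
        have h5 := mulr_ge0 h4 h3.
        rewrite /U /S; rewrite /U in h3 h5; lra.
      rewrite big_split /= -!mulr_sumr.
      have := ler_wpM2l ia0 (sumY w).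
      lra.
  have -> : (fun w => (r0 * al * \sum_(t < T) U t w + (4 * al)^-1 * Y)%:E) =
     (fun w => ((r0 * al)%:E * (\sum_(t < T) (U t w)%:E)
               + (cst ((4 * al)^-1 * Y)%:E) w)%E).
    by apply/funext => w; rewrite /= sumEFin.
  have ral0 : 0 <= r0 * al by rewrite mulr_ge0 // ltW.
  have mUs : measurable_fun setT (fun w => \sum_(t < T) (U t w)%:E)%E.
    have -> : (fun w => \sum_(t < T) (U t w)%:E)%E = EFin \o (fun w => \sum_(t < T) U t w).
      by apply/funext => w; rewrite /= sumEFin.
    by apply/measurable_EFinP; apply: measurable_sum => t; exact: mU.
  rewrite ge0_integralD //; last 3 first.
  - move=> w _; apply: mule_ge0; first by rewrite lee_fin.
    by apply: sume_ge0 => t _; rewrite lee_fin.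
  - have -> : (fun w => (r0 * al)%:E * (\sum_(t < T) (U t w)%:E))%E =
       EFin \o (fun w => r0 * al * \sum_(t < T) U t w).
      by apply/funext => w; rewrite /= sumEFin.
    apply/measurable_EFinP; apply: measurable_funM => //.
    by apply: measurable_sum => t; exact: mU.
  - by move=> w _; rewrite /= lee_fin mulr_ge0 // ltW.
  rewrite ge0_integralZl_EFin //; last first.
    by move=> w _; apply: sume_ge0 => t _; rewrite lee_fin.
  rewrite integral_cst //= probability_setT mule1.
  rewrite ge0_integral_sum //; first last.
  - by move=> t w _; rewrite lee_fin.
  - by move=> t; apply/measurable_EFinP.
  rewrite EFinD (EFinM (r0 * al)); apply: leeD2r; apply: lee_wpmul2l; first by rewrite lee_fin.
  apply: (@le_trans _ _ (\sum_(t < T) (sigma0 ^+ 2)%:E)%E).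
    by apply: lee_sum => t _; exact: EU.
  by rewrite sumEFin sumr_const card_ord mulr_natl.
have q0 : 0 < Num.sqrt (T%:R : R) by rewrite sqrtr_gt0 ltr0n.
have qq : (T%:R : R) = Num.sqrt (T%:R : R) ^+ 2 by rewrite sqr_sqrtr // ler0n.
set q := Num.sqrt (T%:R : R) in q0 qq *.
set s := Num.sqrt (2 * (f x0 + c) * B / eta).
have s0 : 0 < s by rewrite sqrtr_gt0 divr_gt0 // !mulr_gt0.
have sY : s ^+ 2 = r0 * Y.
  rewrite sqr_sqrtr; last by rewrite ltW // divr_gt0 // !mulr_gt0.
  by rewrite /Y -r0sq; field; rewrite gt_eqF.
move: Hsigma0 key; rewrite le_eqVlt => /orP[/eqP <-|sg0] key.
  rewrite mulr0 mul0r; apply/lee_addgt0Pr => e e0; rewrite add0e.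
  have al0 : 0 < Y / (4 * e) by rewrite divr_gt0 // mulr_gt0.
  apply: le_trans (key _ al0) _; rewrite lee_fin.
  rewrite le_eqVlt; apply/orP; left; apply/eqP.
  by field; rewrite !gt_eqF.
have al0 : 0 < s / (2 * r0 * q * sigma0) by rewrite divr_gt0 // !mulr_gt0.
apply: le_trans (key _ al0) _; rewrite lee_fin.
have Ye : Y = s ^+ 2 / r0 by rewrite sY; field; rewrite gt_eqF.
rewrite qq Ye le_eqVlt; apply/orP; left; apply/eqP.
by field; rewrite !gt_eqF.
Qed.
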